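(* For every ordered graph $H$ and every $\varepsilon>0$ there exists $C\in\mathbb{N}$ such that for all $d\in\mathbb{N}$ and all subsets $\mathcal{L}\subseteq[d]$ with $|\mathcal{L}|\ge C$, there exists a random variable $\Phi$ taking values in the set of embeddings of $H$ into the complete ordered graph $K$ on $\{0,1\}^d$ with the following property. For all but at most $\varepsilon|\mathcal{L}|$ levels $\ell\in\mathcal{L}$, all but at most an $\varepsilon$-proportion of the pairs $\{x,y\}\subseteq\{0,1\}^d$ with $\delta(x,y)=\ell$ satisfy \[ \mathbb{P}(xy\in\Phi(H))\ge(1-\varepsilon)\frac{e(H)}{|\mathcal{L}|\,\tau_{\ell,d}}. \]
   Context: An ordered graph is a graph with a totally ordered vertex set. An embedding of an ordered graph $H$ into an ordered graph $K$ is an injective order-preserving map $V(H)\to V(K)$ sending edges to edges; $\Phi(H)$ denotes the image of $H$ (so $xy\in\Phi(H)$ means $xy$ is the image of an edge of $H$). For distinct $x,y\in\{0,1\}^d$, $\delta(x,y)=\min\{i:x_i\ne y_i\}$; $\{0,1\}^d$ is ordered lexicographically ($x<y$ iff $x_{\delta(x,y)}=0$). $\tau_{\ell,d}=2^{2d-\ell-1}$ is the number of pairs $\{x,y\}\subseteq\{0,1\}^d$ with $\delta(x,y)=\ell$. *)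

(* Defs.v *)
From mathcomp Require Import all_boot all_order all_algebra.
From mathcomp Require Import reals.
Set Implicit Arguments. Unset Strict Implicit. Unset Printing Implicit Defensive.
Import Order.TTheory GRing.Theory Num.Theory.

(* The cube {0,1}^d; coordinate i : 'I_d corresponds to coordinate i+1 of the paper. *)
Definition cube (d : nat) := {ffun 'I_d -> bool}.

(* delta(x,y) = l  (l 0-indexed: paper level l+1) *)
Definition delta_is (d : nat) (x y : cube d) (l : 'I_d) : bool :=
  (x l != y l) && [forall j : 'I_d, (j < l)%N ==> (x j == y j)].

(* lexicographic strict order: x < y iff x_{delta(x,y)} = 0 *)
Definition lexlt (d : nat) (x y : cube d) : bool :=
  [exists l : 'I_d, delta_is x y l && ~~ x l].

(* tau_{l,d} = 2^(2d - l - 1) for the paper's 1-indexed level l; here l is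
   0-indexed so the paper level is l.+1. *)
Definition tau (d : nat) (l : 'I_d) : nat := 2 ^ (2 * d - l.+1 - 1).

(* Ordered graph H: vertex set 'I_n with its natural order, edge relation E. *)
Definition num_edges (n : nat) (E : rel 'I_n) : nat :=
  #|[set p : 'I_n * 'I_n | E p.1 p.2 && (p.1 < p.2)%N]|.

(* embedding of H into the complete ordered graph K on {0,1}^d:
   injective order-preserving map (edges automatically go to edges of K). *)
Definition is_embedding (n d : nat) (f : {ffun 'I_n -> cube d}) : bool :=
  injectiveb f && [forall u : 'I_n, forall v : 'I_n, (u < v)%N ==> lexlt (f u) (f v)].

Definition edge_in_image (n d : nat) (E : rel 'I_n) (f : {ffun 'I_n -> cube d})
  (x y : cube d) : bool :=
  [exists u : 'I_n, exists v : 'I_n, [&& E u v, f u == x & f v == y]].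

Section Prob.
Variable R : realType.

(* a random variable with values in the embeddings = a probability
   distribution on the finite set of maps, supported on embeddings *)
Definition is_embedding_distr (n d : nat) (p : {ffun 'I_n -> cube d} -> R) : Prop :=
  (forall f, 0 <= p f)%R /\ (\sum_f p f = 1)%R /\
  (forall f, p f != 0%R -> is_embedding f).

Definition prob_edge (n d : nat) (E : rel 'I_n) (p : {ffun 'I_n -> cube d} -> R)
  (x y : cube d) : R :=
  (\sum_(f | edge_in_image E f x y) p f)%R.

Definition bad_pairs (n d : nat) (E : rel 'I_n) (p : {ffun 'I_n -> cube d} -> R)
  (eps : R) (L : {set 'I_d}) (l : 'I_d) : {set cube d * cube d} :=
  [set q : cube d * cube d | [&& lexlt q.1 q.2, delta_is q.1 q.2 l &
     ~~ (prob_edge E p q.1 q.2 >=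
         (1 - eps) * (num_edges E)%:R / (#|L|%:R * (tau l)%:R))%R]].

Definition good_level (n d : nat) (E : rel 'I_n) (p : {ffun 'I_n -> cube d} -> R)
  (eps : R) (L : {set 'I_d}) (l : 'I_d) : bool :=
  (#|bad_pairs E p eps L l|%:R <= eps * (tau l)%:R)%R.
End Prob.

(* Main.v *)
Require Import Defs.
From mathcomp Require Import all_boot all_order all_algebra.
From mathcomp Require Import reals.
From mathcomp Require Import zify ring lra.
Import Order.TTheory GRing.Theory Num.Theory.

Section Aux.
Set Implicit Arguments. Unset Strict Implicit. Unset Printing Implicit Defensive.

Lemma sum_ffun_prod (I J : finType) (h : I -> J -> nat) :
  \sum_(f : {ffun I -> J}) \prod_i h i (f i) = \prod_i \sum_j h i j.
Proof. by rewrite bigA_distr_bigA. Qed.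

Lemma sum_ffun2_prod (I J : finType) (h : I -> J -> J -> nat) :
  \sum_(f : {ffun I -> J}) \sum_(g : {ffun I -> J}) \prod_i h i (f i) (g i)
  = \prod_i \sum_a \sum_b h i a b.
Proof.
rewrite -sum_ffun_prod; apply: eq_bigr => f _.
by rewrite (sum_ffun_prod (fun i b => h i (f i) b)).
Qed.

Lemma eqb_prod (I : finType) (T : eqType) (f g : {ffun I -> T}) :
  ((f == g) : nat) = \prod_i (f i == g i : nat).
Proof.
case: eqP => [->|/eqP ne].
  by rewrite big1 // => i _; rewrite eqxx.
have [i hi] : exists i, f i != g i.
  apply/existsP; apply: contraNT ne => /existsPn H; apply/eqP/ffunP => i.
  by apply/eqP; move: (H i); rewrite negbK.
by rewrite (bigD1 i) //= (negbTE hi).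
Qed.

Lemma nat_bool_le1 (b : bool) : (b : nat) <= 1.
Proof. by case: b. Qed.

Lemma sum_bits1 N (i : 'I_N) (w : bool) :
  (\sum_(b : {ffun 'I_N -> bool}) (b i == w : nat)) * 2 = 2 ^ N.
Proof.
rewrite (eq_bigr (fun b : {ffun 'I_N -> bool} => \prod_k (if k == i then (b k == w : nat) else 1))); last first.
  by move=> b _; rewrite (bigD1 i) //= eqxx big1 ?muln1 // => k /negbTE ->.
rewrite (sum_ffun_prod (fun k b => if k == i then (b == w : nat) else 1)).
rewrite -[in RHS](card_ord N) -prod_nat_const (bigD1 i) //= [in RHS](bigD1 i) //=.
rewrite eqxx.
have -> : \sum_(j : bool) (j == w : nat) = 1 by rewrite big_bool; case: w.
rewrite mul1n mulnC; congr (_ * _); apply: eq_bigr => k /negbTE ->.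
by rewrite big_bool.
Qed.

Lemma sum_bits2 N (i j : 'I_N) (w1 w2 : bool) : i != j ->
  (\sum_(b : {ffun 'I_N -> bool}) ((b i == w1) && (b j == w2) : nat)) * 4 = 2 ^ N.
Proof.
move=> nij.
rewrite (eq_bigr (fun b : {ffun 'I_N -> bool} => \prod_k (if k == i then (b k == w1 : nat)
     else if k == j then (b k == w2 : nat) else 1))); last first.
  move=> b _; rewrite (bigD1 i) //= eqxx (bigD1 j) /=; last by rewrite eq_sym.
  have nji : (j == i) = false by rewrite eq_sym (negbTE nij).
  rewrite nji eqxx big1; last first.
    by move=> k /andP[/negbTE -> /negbTE ->].
  by case: (b i == w1); case: (b j == w2).
rewrite (sum_ffun_prod (fun k b => if k == i then (b == w1 : nat)
     else if k == j then (b == w2 : nat) else 1)).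
rewrite -[in RHS](card_ord N) -prod_nat_const (bigD1 i) //= [in RHS](bigD1 i) //=.
rewrite (bigD1 j) /=; last by rewrite eq_sym.
rewrite [in RHS](bigD1 j) /=; last by rewrite eq_sym.
have nji : (j == i) = false by rewrite eq_sym (negbTE nij).
rewrite eqxx nji eqxx.
have h1 : forall w, \sum_(j : bool) (j == w : nat) = 1 by move=> w; rewrite big_bool; case: w.
rewrite !h1 !mul1n mulnC mulnA; congr (_ * _); apply: eq_bigr => k /andP[/negbTE -> /negbTE ->].
by rewrite big_bool.
Qed.

Inductive kind (N : nat) := KC of bool | KV of 'I_N.
Definition ev N (k : kind N) (b : {ffun 'I_N -> bool}) : bool :=
  match k with KC x => x | KV i => b i end.
Definition wt N (k1 k2 : kind N) : nat :=
  match k1, k2 with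
  | KC _, KC _ => 1
  | KV i, KV j => if i == j then 2 else 4
  | _, _ => 2 end.
Definition isC N (k : kind N) : bool := if k is KC _ then true else false.

Lemma sum_all_bits N : \sum_(b : {ffun 'I_N -> bool}) 1 = 2 ^ N.
Proof. by rewrite sum1_card card_ffun card_bool card_ord. Qed.

Lemma kind_bound N (k1 k2 : kind N) (x1 x2 : bool) :
  (\sum_b ((ev k1 b == x1) && (ev k2 b == x2) : nat)) * wt k1 k2 <= 2 ^ N.
Proof.
case: k1 => [a|i]; case: k2 => [c|j] /=.
- rewrite muln1 -sum_all_bits; apply: leq_sum => b _; exact: nat_bool_le1.
- rewrite -(sum_bits1 j x2) leq_mul2r /=; apply: leq_sum => b _.
  by case: (a == x1); case: (b j == x2).
- rewrite -(sum_bits1 i x1) leq_mul2r /=; apply: leq_sum => b _.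
  by case: (c == x2); case: (b i == x1).
- case: eqP => [<-|/eqP nij].
    rewrite -(sum_bits1 i x1) leq_mul2r /=; apply: leq_sum => b _.
    by case: (b i == x1); case: (b i == x2).
  by rewrite (sum_bits2 x1 x2 nij).
Qed.

Definition pcount N (k1 k2 k1' k2' : kind N) : nat :=
  \sum_(b : {ffun 'I_N -> bool}) \sum_(b' : {ffun 'I_N -> bool})
     ((ev k1 b == ev k1' b') && (ev k2 b == ev k2' b') : nat).

Lemma pcount_bound_r N (k1 k2 k1' k2' : kind N) :
  pcount k1 k2 k1' k2' * wt k1' k2' <= 2 ^ N * 2 ^ N.
Proof.
rewrite /pcount -sum_all_bits [in X in _ <= X]big_distrl big_distrl /=; apply: leq_sum => b _.
rewrite mul1n sum_all_bits; apply: leq_trans (kind_bound k1' k2' (ev k1 b) (ev k2 b)).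
rewrite leq_mul2r; apply/orP; right; apply: eq_leq; apply: eq_bigr => b' _.
by rewrite ![_ == ev _ b']eq_sym.
Qed.

Lemma pcount_bound_l N (k1 k2 k1' k2' : kind N) :
  pcount k1 k2 k1' k2' * wt k1 k2 <= 2 ^ N * 2 ^ N.
Proof.
rewrite /pcount exchange_big /= -sum_all_bits [in X in _ <= X]big_distrl big_distrl /=; apply: leq_sum => b' _.
rewrite mul1n sum_all_bits; apply: leq_trans (kind_bound k1 k2 (ev k1' b') (ev k2' b')).
by rewrite leq_mul2r; apply/orP; right.
Qed.

Lemma pcount_le N (k1 k2 k1' k2' : kind N) : pcount k1 k2 k1' k2' <= 2 ^ N * 2 ^ N.
Proof.
apply: leq_trans (pcount_bound_l k1 k2 k1' k2'); rewrite leq_pmulr //.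
by case: k1 => [?|?]; case: k2 => [?|?] //=; case: ifP.
Qed.

Lemma pc_diag N (k k' : kind N) :
  pcount k k k' k' * 2 <= 2 ^ N * 2 ^ N * 2 ^ (isC k && isC k').
Proof.
case: k => [a|i].
  case: k' => [a'|i'] /=.
    by rewrite expn1 leq_mul2r /= pcount_le.
  rewrite expn0 muln1; have := pcount_bound_r (KC _ a) (KC _ a) (KV i') (KV i').
  by rewrite /= eqxx.
rewrite /= expn0 muln1; have := pcount_bound_l (KV i) (KV i) k' k'.
by rewrite /= eqxx.
Qed.

Lemma pc_off N (i i' : 'I_N) (k2 k2' : kind N) : k2 <> KV i -> k2' <> KV i' ->
  pcount (KV i) k2 (KV i') k2' * 4 <= 2 ^ N * 2 ^ N * 2 ^ (isC k2 && isC k2').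
Proof.
move=> h2 h2'.
case: k2 h2 => [a|j] h2.
  case: k2' h2' => [a'|j'] h2' /=.
    rewrite expn1 (_ : 4 = 2 * 2) // mulnA leq_mul2r /=.
    by have := pcount_bound_l (KV i) (KC _ a) (KV i') (KC _ a').
  rewrite expn0 muln1; have := pcount_bound_r (KV i) (KC _ a) (KV i') (KV j').
  by rewrite /=; case: eqP => // e; case: h2'; rewrite e.
rewrite /= expn0 muln1; have := pcount_bound_l (KV i) (KV j) (KV i') k2'.
by rewrite /=; case: eqP => // e; case: h2; rewrite e.
Qed.

Section Lenum.
Variables (d : nat) (L : {set 'I_d}).
Definition Lseq := [seq val x | x <- enum L].
Definition Lnat (s : nat) : nat := nth d Lseq s.

Lemma size_Lseq : size Lseq = #|L|.
Proof. by rewrite size_map cardE. Qed.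

Lemma Lseq_sorted : sorted ltn Lseq.
Proof.
rewrite /Lseq.
have -> : enum L = [seq x <- enum 'I_d | x \in L].
  by rewrite enumT /enum_mem.
rewrite sorted_map; apply: sorted_filter; first by move=> a b c; apply: ltn_trans.
by rewrite -sorted_map val_enum_ord iota_ltn_sorted.
Qed.

Lemma Lnat_mono s t : s < t -> t < #|L| -> Lnat s < Lnat t.
Proof.
move=> st tL; apply: (sorted_ltn_nth ltn_trans d Lseq_sorted) => //; rewrite inE /= size_Lseq //.
exact: ltn_trans st tL.
Qed.

Lemma Lnat_inj s t : s < #|L| -> t < #|L| -> Lnat s = Lnat t -> s = t.
Proof.
move=> sL tL e; case: (ltngtP s t) => // h.
  by move: (Lnat_mono h tL); rewrite e ltnn.
by move: (Lnat_mono h sL); rewrite e ltnn.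
Qed.

Lemma Lnat_in s : s < #|L| -> exists2 l : 'I_d, l \in L & val l = Lnat s.
Proof.
move=> sL; have : nth d Lseq s \in Lseq by rewrite mem_nth // size_Lseq.
by rewrite /Lnat; case/mapP=> l; rewrite mem_enum => lL ->; exists l.
Qed.

Lemma Lnat_lt s : s < #|L| -> Lnat s < d.
Proof. by move=> /Lnat_in [l _ <-]; apply: ltn_ord. Qed.

Lemma Lnat_idx (l : 'I_d) : l \in L -> exists2 s, s < #|L| & Lnat s = l.
Proof.
move=> lL; exists (index (val l) Lseq).
  by rewrite -size_Lseq index_mem; apply/mapP; exists l; rewrite ?mem_enum.
by rewrite /Lnat nth_index //; apply/mapP; exists l; rewrite ?mem_enum.
Qed.
End Lenum.

Section Cons.
Variables (n d : nat) (L : {set 'I_d}) (B M : nat).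
Hypothesis HM : M + n * B <= #|L|.

Definition cfg := ('I_M * 'I_B)%type.
Definition lev (c : cfg) (k : nat) : nat :=
  if k < n.-1 then Lnat L (c.1 + k * (c.2).+1) else d.

Lemma lev_idx (c : cfg) k : k < n.-1 -> c.1 + k * (c.2).+1 < #|L|.
Proof.
case: c => [[t ht] [s hs]] /= hk.
have : k * s.+1 <= k * B by rewrite leq_mul2l hs orbT.
have : k * B <= n * B by rewrite leq_mul2r; apply/orP; right; move: hk; clear; lia.
move: HM; clear -ht; move: (k * s.+1) (k * B) (n * B) => x y z h1 h2 h3.
apply: leq_trans h1; rewrite -addSn leq_add //; exact: leq_trans h3 h2.
Qed.

Lemma lev_lt c k : k < n.-1 -> lev c k < d.
Proof. by move=> hk; rewrite /lev hk; apply: Lnat_lt; apply: lev_idx. Qed.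

Lemma lev_mono c i j : i < j -> j < n -> lev c i < lev c j.
Proof.
move=> ij jn; have hi : i < n.-1 by lia.
rewrite {2}/lev; case: ifP => hj.
  rewrite /lev hi; apply: Lnat_mono; last exact: lev_idx.
  by rewrite ltn_add2l ltn_mul2r ij.
exact: lev_lt.
Qed.

Lemma lev_mono_le c i j : i <= j -> j < n -> lev c i <= lev c j.
Proof.
rewrite leq_eqVlt => /orP[/eqP -> //|ij] jn; exact/ltnW/lev_mono.
Qed.

Definition kd (c : cfg) (i : 'I_n) (p : nat) : kind n.+1 :=
  if p < lev c i then
    (if [exists k : 'I_n, (k < i) && (lev c k == p)] then KC _ true else KV ord_max)
  else if p == lev c i then KC _ false else KV (widen_ord (leqnSn n) i).

Definition Om := {ffun 'I_d -> {ffun 'I_n.+1 -> bool}}.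
Definition F (c : cfg) (w : Om) : {ffun 'I_n -> cube d} :=
  [ffun i => [ffun p : 'I_d => ev (kd c i p) (w p)]].

Lemma kd_lt c (u v : 'I_n) p : u < v -> p < lev c u -> kd c u p = kd c v p.
Proof.
move=> uv pu; have pv : p < lev c v by apply: leq_trans pu (lev_mono_le _ (ltnW uv) _).
rewrite /kd pu pv.
have -> : [exists k : 'I_n, (k < u) && (lev c k == p)] =
          [exists k : 'I_n, (k < v) && (lev c k == p)] => //.
apply/existsP/existsP => [[k /andP[ku kp]]|[k /andP[kv /eqP kp]]].
  by exists k; rewrite (ltn_trans ku uv).
exists k; rewrite kp eqxx andbT; case: (ltnP k u) => // uk.
by move: (lev_mono_le c uk (ltn_ord k)); rewrite kp leqNgt pu.
Qed.

Lemma kd_eq c (u v : 'I_n) : u < v ->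
  kd c u (lev c u) = KC _ false /\ kd c v (lev c u) = KC _ true.
Proof.
move=> uv; rewrite /kd ltnn eqxx (lev_mono c uv (ltn_ord v)); split => //.
by case: existsP => // -[]; exists u; rewrite uv eqxx.
Qed.

Lemma kd_gt c (u v : 'I_n) p : u < v -> lev c u < p ->
  kd c u p = KV (widen_ord (leqnSn n) u) /\ kd c v p <> KV (widen_ord (leqnSn n) u).
Proof.
move=> uv up; rewrite /kd ltnNge (ltnW up) /= (gtn_eqF up); split => //.
case: ifP => _; first case: ifP => _ //.
  move=> e; have /= e' := congr1 (fun k : kind n.+1 => if k is KV j then val j else 0) e.
  by move: (ltn_ord u); rewrite -e' ltnn.
case: ifP => _ //.
move=> e; have /= e' := congr1 (fun k : kind n.+1 => if k is KV j then val j else 0) e.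
by move: uv; rewrite e' ltnn.
Qed.

Lemma kd_C c (i : 'I_n) (p : 'I_d) : isC (kd c i p) ->
  exists2 k : 'I_n, k < n.-1 & lev c k = p.
Proof.
rewrite /kd; case: ifP => pi.
  case: existsP => [[k /andP[ki /eqP kp]] _|_ //].
  by exists k => //; move: (ltn_ord i) ki; clear; lia.
case: ifP => // /eqP pe _; exists i => //.
move: pe; rewrite /lev; case: ifP => // _ pe.
by move: (ltn_ord p); rewrite pe ltnn.
Qed.

Definition lord c (u : 'I_n) (h : u < n.-1) : 'I_d := Ordinal (lev_lt c h).

Lemma F_delta c w (u v : 'I_n) (h : u < n.-1) : u < v ->
  [/\ delta_is (F c w u) (F c w v) (lord c h), lexlt (F c w u) (F c w v)
     & ~~ F c w u (lord c h)].
Proof.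
move=> uv.
have hd : delta_is (F c w u) (F c w v) (lord c h).
  rewrite /delta_is !ffunE /=; have [-> ->] := kd_eq c uv; rewrite /=.
  apply/forallP => j; apply/implyP => jl; rewrite !ffunE /=.
  by rewrite (kd_lt uv jl).
have hf : ~~ F c w u (lord c h) by rewrite !ffunE /=; have [-> _] := kd_eq c uv.
by split => //; apply/existsP; exists (lord c h); rewrite hd.
Qed.

Lemma F_emb c w : is_embedding (F c w).
Proof.
have hl : forall u v : 'I_n, u < v -> lexlt (F c w u) (F c w v) /\ F c w u != F c w v.
  move=> u v uv; have h : u < n.-1 by move: (ltn_ord v) uv; clear; lia.
  have [hd hl _] := F_delta c w h uv; split => //.
  by apply/eqP => e; move: hd; rewrite /delta_is e eqxx.
apply/andP; split.
  apply/injectiveP => u v e; case: (ltngtP u v) => [h|h|/val_inj //].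
    by have [_] := hl _ _ h; rewrite e eqxx.
  by have [_] := hl _ _ h; rewrite e eqxx.
by apply/forallP => u; apply/forallP => v; apply/implyP => uv; case: (hl _ _ uv).
Qed.
End Cons.

Lemma sum_eq_ord M k : k < M -> \sum_(t < M) (val t == k : nat) = 1.
Proof.
move=> hk; rewrite (bigD1 (Ordinal hk)) //= eqxx big1 // => t ht.
by case: eqP => // e; move: ht; rewrite -(inj_eq val_inj) /= e eqxx.
Qed.

Lemma sum_le1 (T : finType) (P : pred T) :
  (forall x y, P x -> P y -> x = y) -> \sum_(x : T) (P x : nat) <= 1.
Proof.
move=> h; rewrite -big_mkcondr /= sum1_card; apply/card_le1_eqP => x y hx hy.
exact: h.
Qed.

Lemma sum_sq (X Y : finType) (P : pred X) (g : X -> Y) :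
  \sum_(q : Y) (\sum_(x : X) (P x && (g x == q) : nat)) * (\sum_(x : X) (P x && (g x == q) : nat))
  = \sum_(x : X) \sum_(x' : X) (P x && P x' && (g x == g x') : nat).
Proof.
under eq_bigr => q _ do rewrite big_distrl /=.
under eq_bigr => q _ do under eq_bigr => x _ do rewrite big_distrr /=.
rewrite exchange_big; apply: eq_bigr => x _; rewrite exchange_big; apply: eq_bigr => x' _.
rewrite (bigD1 (g x)) //= eqxx big1 ?addn0; last first.
  by move=> q; rewrite eq_sym => /negbTE ->; rewrite andbF.
by rewrite andbT eq_sym; case: (P x); case: (P x'); case: (g x == g x').
Qed.

Section Edge.
Variables (n d : nat) (L : {set 'I_d}) (B M : nat).
Hypothesis HM : M + n * B <= #|L|.
Variables (u v : 'I_n) (s : nat).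
Hypothesis uv : u < v.
Hypothesis hsB : n * B <= s.
Hypothesis hsM : s < M.

Definition lv := Lnat L s.

Lemma hu : u < n.-1.
Proof. by move: uv (ltn_ord v); clear; lia. Qed.

Lemma hsL : s < #|L|.
Proof. by move: hsM HM; clear; lia. Qed.

Lemma lv_lt : lv < d.
Proof. exact: Lnat_lt hsL. Qed.

Lemma lev_u_eq (c : cfg B M) : (lev n L c u == lv) = (c.1 + u * (c.2).+1 == s).
Proof.
rewrite /lev hu; apply/eqP/eqP => [e|->//].
exact: Lnat_inj (lev_idx HM c hu) hsL e.
Qed.

Lemma lev_count : \sum_(c : cfg B M) (lev n L c u == lv : nat) = B.
Proof.
rewrite -(pair_bigA _ (fun t (si : 'I_B) => (lev n L (t, si) u == lv : nat))) /=.
rewrite exchange_big /= -[B in RHS]card_ord -sum1_card; apply: eq_bigr => si _.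
rewrite (eq_bigr (fun t : 'I_M => (val t == s - u * si.+1 : nat))); last first.
  move=> t _; rewrite lev_u_eq /=; congr nat_of_bool.
  have : u * si.+1 <= s.
    apply: leq_trans hsB; apply: leq_trans (_ : u * B <= _); first by rewrite leq_mul2l ltn_ord orbT.
    by rewrite leq_mul2r (ltnW (ltn_ord u)) orbT.
  move=> h; apply/eqP/eqP => e; lia.
by apply: sum_eq_ord; move: hsM; clear; lia.
Qed.

Definition lo : 'I_d := Ordinal lv_lt.

Definition Aset (q : cube d * cube d) : bool := lexlt q.1 q.2 && delta_is q.1 q.2 lo.

Definition Xs := (cfg B M * Om n d)%type.
Definition gF (x : Xs) : cube d * cube d := (F L x.1 x.2 u, F L x.1 x.2 v).
Definition Pl (x : Xs) : bool := lev n L x.1 u == lv.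

Definition cnt (q : cube d * cube d) : nat := \sum_(x : Xs) (Pl x && (gF x == q) : nat).

Lemma gF_A x : Pl x -> Aset (gF x).
Proof.
rewrite /Pl => /eqP e; have [hd hl _] := F_delta HM x.1 x.2 hu uv.
rewrite /Aset /gF /=.
have -> : lo = lord HM x.1 hu by apply: val_inj; rewrite /= e.
by rewrite hd hl.
Qed.

Lemma sumA_cnt : \sum_(q | Aset q) cnt q = B * \sum_(w : Om n d) 1.
Proof.
rewrite /cnt exchange_big /=.
rewrite (eq_bigr (fun x : Xs => (Pl x : nat))); last first.
  move=> x _; case: (boolP (Pl x)) => hx /=; last by rewrite big1.
  rewrite (bigD1 (gF x)) ?gF_A //= eqxx big1 // => q /andP[_ /negbTE].
  by rewrite eq_sym => ->.
rewrite -(pair_bigA _ (fun (c : cfg B M) (w : Om n d) => (Pl (c, w) : nat))) /=.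
rewrite -[X in X * _]lev_count big_distrl /=; apply: eq_bigr => c _.
by rewrite big_distrr /=; apply: eq_bigr => w _; rewrite muln1.
Qed.

Definition coll (c c' : cfg B M) : nat :=
  \sum_(w : Om n d) \sum_(w' : Om n d)
    ((F L c w u == F L c' w' u) && (F L c w v == F L c' w' v) : nat).

Lemma sumsq_cnt : \sum_q cnt q * cnt q =
  \sum_(c : cfg B M) \sum_(c' : cfg B M)
     (((lev n L c u == lv) && (lev n L c' u == lv) : nat) * coll c c').
Proof.
have E1 : forall G : Xs -> nat,
    \sum_(x : Xs) G x = \sum_(c : cfg B M) \sum_(w : Om n d) G (c, w).
  by move=> G; rewrite pair_bigA; apply: eq_bigr => -[].
rewrite /cnt sum_sq E1; apply: eq_bigr => c _.
under eq_bigr do rewrite E1.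
rewrite exchange_big; apply: eq_bigr => c' _.
rewrite /coll big_distrr; apply: eq_bigr => w _; rewrite big_distrr; apply: eq_bigr => w' _.
by rewrite /Pl /gF /= xpair_eqE mulnb.
Qed.

Definition pc (c c' : cfg B M) (p : 'I_d) : nat :=
  pcount (kd L c u p) (kd L c v p) (kd L c' u p) (kd L c' v p).

Lemma coll_prod c c' : coll c c' = \prod_(p : 'I_d) pc c c' p.
Proof.
rewrite /coll /pc /pcount.
rewrite -(sum_ffun2_prod (fun (p : 'I_d) (b b' : {ffun 'I_n.+1 -> bool}) =>
  ((ev (kd L c u p) b == ev (kd L c' u p) b') && (ev (kd L c v p) b == ev (kd L c' v p) b') : nat))).
apply: eq_bigr => w _; apply: eq_bigr => w' _.
rewrite -mulnb !eqb_prod -big_split /=; apply: eq_bigr => p _.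
by rewrite !ffunE mulnb.
Qed.

Definition ee (p : nat) : nat := if p < lv then 1 else if p == lv then 0 else 2.

Lemma sum_ee : \sum_(p < d) ee p = 2 * d - lv.+1 - 1.
Proof.
have hl := lv_lt.
rewrite -(big_mkord xpredT ee) (big_cat_nat (n:=lv)) //=; last exact: ltnW.
rewrite [X in _ + X](big_cat_nat (n:=lv.+1)) //=.
rewrite big_nat1 /ee ltnn eqxx add0n.
rewrite (eq_big_nat _ _ (F2 := fun _ => 1)); last by move=> i /andP[_ ->].
rewrite [X in _ + X](eq_big_nat _ _ (F2 := fun _ => 2)); last first.
  by move=> i /andP[h _]; rewrite ltnNge (ltnW h) /= gtn_eqF.
rewrite !sum_nat_const_nat; lia.
Qed.

Definition Sc (c : cfg B M) : {set 'I_d} :=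
  [set p : 'I_d | (val p != lv) && (isC (kd L c u p) || isC (kd L c v p))].

Lemma pc_bound c c' p : lev n L c u = lv -> lev n L c' u = lv ->
  pc c c' p * 2 ^ ee p <= 2 ^ n.+1 * 2 ^ n.+1 * 2 ^ ((p \in Sc c) && (p \in Sc c')).
Proof.
move=> ec ec'; rewrite /pc /Sc !inE /ee.
case: (ltngtP p lv) => hp.
- rewrite !(kd_lt HM uv) ?ec ?ec' // !orbb expn1 /=.
  exact: pc_diag.
- have h1 : lev n L c u < p by rewrite ec.
  have h1' : lev n L c' u < p by rewrite ec'.
  have [-> h2] := kd_gt uv h1.
  have [-> h2'] := kd_gt uv h1'.
  rewrite /= (_ : 2 ^ 2 = 4) //; exact: pc_off.
- rewrite expn0 muln1; apply: leq_trans (pcount_le _ _ _ _) _.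
  by rewrite leq_pmulr // expn_gt0.
Qed.

Definition Om2 : nat := (2 ^ n.+1 * 2 ^ n.+1) ^ d.

Lemma tau_lo : tau lo = 2 ^ (\sum_(p < d) ee p).
Proof. by rewrite sum_ee. Qed.

Lemma coll_bound c c' : lev n L c u = lv -> lev n L c' u = lv ->
  coll c c' * tau lo <= Om2 * 2 ^ #|Sc c :&: Sc c'|.
Proof.
move=> ec ec'; rewrite coll_prod tau_lo expn_sum -big_split /=.
apply: leq_trans (leq_prod (fun p _ => pc_bound p ec ec')) _.
rewrite big_split /= prod_nat_const card_ord -expn_sum /Om2 leq_mul2l; apply/orP; right.
apply: eq_leq; congr (_ ^ _); rewrite -sum1_card [RHS]big_mkcond /=; apply: eq_bigr => p _.
by rewrite in_setI; case: (_ && _).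
Qed.

Lemma card_Sc c : #|Sc c| <= n.
Proof.
pose T := [set p : 'I_d | [exists k : 'I_n, lev n L c k == p]].
have sub : Sc c \subset T.
  apply/subsetP => p; rewrite !inE => /andP[_ /orP[h|h]]; apply/existsP.
    by have [k _ e] := kd_C h; exists k; rewrite e.
  by have [k _ e] := kd_C h; exists k; rewrite e.
apply: leq_trans (subset_leq_card sub) _.
rewrite -sum1_card big_mkcond /=.
apply: (@leq_trans (\sum_(p : 'I_d) \sum_(k : 'I_n) (lev n L c k == p : nat))).
  apply: leq_sum => p _; rewrite inE; case: existsP => // -[k hk].
  by rewrite (bigD1 k) //= hk.
rewrite exchange_big /= -[n in X in _ <= X]card_ord -sum1_card; apply: leq_sum => k _.
by apply: sum_le1 => x y /eqP -> /eqP /val_inj.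
Qed.

Definition OV (c c' : cfg B M) : nat :=
  \sum_(k : 'I_n) \sum_(k' : 'I_n)
    ((k < n.-1) && (k' < n.-1) && (k' != u :> nat) && (lev n L c k == lev n L c' k') : nat).

Lemma coll_bound2 c c' : lev n L c u = lv -> lev n L c' u = lv ->
  coll c c' * tau lo <= Om2 * (1 + 2 ^ n * OV c c').
Proof.
move=> ec ec'; apply: leq_trans (coll_bound ec ec') _; rewrite leq_mul2l; apply/orP; right.
case: (set_0Vmem (Sc c :&: Sc c')) => [->|[p]]; first by rewrite cards0.
rewrite !inE => /andP[/andP[hp h1] /andP[_ h2]].
have [k hk ek] : exists2 k : 'I_n, k < n.-1 & lev n L c k = p.
  by case/orP: h1 => h; have [k hk e] := kd_C h; exists k.
have [k' hk' ek'] : exists2 k : 'I_n, k < n.-1 & lev n L c' k = p.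
  by case/orP: h2 => h; have [j hj e] := kd_C h; exists j.
have ov : 0 < OV c c'.
  rewrite /OV (bigD1 k) //= (bigD1 k') //= hk hk' ek ek' eqxx /= andbT.
  have -> : (k' != u :> nat) = true.
    apply/negP => /eqP e; move: hp => /eqP; apply; rewrite -ec' -e; exact: esym.
  by [].
apply: leq_trans (_ : 2 ^ n * OV c c' <= _); last exact: leq_addl.
apply: leq_trans (_ : 2 ^ n * 1 <= _); last by rewrite leq_mul2l ov orbT.
rewrite muln1 leq_exp2l //; apply: leq_trans (card_Sc c).
by apply: subset_leq_card; apply: subsetIl.
Qed.

Lemma uniq_c k' (hk' : k' < n.-1) (nk : k' != u :> nat) (c1 c2 : cfg B M) :
  lev n L c1 u = lv -> lev n L c2 u = lv -> lev n L c1 k' = lev n L c2 k' -> c1 = c2.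
Proof.
move=> /eqP e1 /eqP e2; rewrite lev_u_eq in e1; rewrite lev_u_eq in e2.
rewrite /lev hk' => /(Lnat_inj (lev_idx HM c1 hk') (lev_idx HM c2 hk')) e.
move: e1 e2 e; case: c1 => [t1 a]; case: c2 => [t2 b] /= /eqP e1 /eqP e2 e.
have ab : a = b :> nat by move: e1 e2 e nk; clear; nia.
have tt : t1 = t2 :> nat by move: e1 e2 ab; clear; nia.
by congr pair; apply: val_inj.
Qed.

Lemma sum_OV : \sum_(c : cfg B M) \sum_(c' : cfg B M)
   (((lev n L c u == lv) && (lev n L c' u == lv) : nat) * OV c c') <= n * n * B.
Proof.
rewrite /OV.
under eq_bigr do under eq_bigr do rewrite big_distrr /=.
under eq_bigr do rewrite exchange_big /=.
rewrite exchange_big /= -[n in X in _ <= X]card_ord -mulnA -sum_nat_const; apply: leq_sum => k _.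
under eq_bigr do under eq_bigr do rewrite big_distrr /=.
under eq_bigr do rewrite exchange_big /=.
rewrite exchange_big /= -sum_nat_const; apply: leq_sum => k' _.
case: (boolP ((k < n.-1) && (k' < n.-1) && (k' != u :> nat))) => hc; last first.
  by rewrite big1 // => c _; rewrite big1 // => c' _; rewrite /= muln0.
move: hc => /andP[/andP[hk hk'] nk].
rewrite -[B in X in _ <= X]lev_count; apply: leq_sum => c _.
case: (boolP (lev n L c u == lv)) => hcu /=; last by rewrite big1.
apply: (@leq_trans (\sum_(c' : cfg B M) ((lev n L c' u == lv) && (lev n L c' k' == lev n L c k) : nat))).
  apply: leq_sum => c' _; rewrite /= mulnb [lev n L c' k' == _]eq_sym.
  by [].
apply: sum_le1 => x y /andP[/eqP hx /eqP ex] /andP[/eqP hy /eqP ey].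
by apply: (uniq_c hk' nk hx hy); rewrite ex ey.
Qed.
End Edge.

Section P5sec.
Local Open Scope ring_scope.

Lemma cheb_alg (R : realType) (nb e mu t S0 S1 eta : R) :
  0 < t -> 0 < mu -> 0 < e -> 0 <= nb -> S0 <= t ->
  nb * e ^+ 2 * mu ^+ 2 <= S1 - 2 * mu * (mu * t) + mu ^+ 2 * S0 ->
  S1 * t <= (mu * t) ^+ 2 * (1 + eta) ->
  nb * e ^+ 2 <= eta * t.
Proof.
move=> t0 m0 e0 nb0 hS0 h1 h2.
have h3 : nb * e ^+ 2 * mu ^+ 2 * t <= eta * (mu * t) ^+ 2.
  have ht : (S1 - 2 * mu * (mu * t) + mu ^+ 2 * S0) * t <= eta * (mu * t) ^+ 2.
    have : mu ^+ 2 * S0 * t <= mu ^+ 2 * t * t.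
      by rewrite -mulrA -[X in _ <= X]mulrA ler_pM2l ?exprn_gt0 // ler_pM2r.
    move: h2; rewrite !expr2; nra.
  apply: le_trans ht; rewrite ler_pM2r //.
have p : 0 < mu ^+ 2 * t by rewrite mulr_gt0 ?exprn_gt0.
rewrite -(ler_pM2r p).
have e1 : nb * e ^+ 2 * (mu ^+ 2 * t) = nb * e ^+ 2 * mu ^+ 2 * t by rewrite !mulrA.
have e2 : eta * t * (mu ^+ 2 * t) = eta * (mu * t) ^+ 2 by rewrite !expr2; ring.
by rewrite e1 e2.
Qed.

Lemma cheb (R : realType) (T : finType) (A : pred T) (X : T -> R) (Q t eta e : R) :
  0 < t -> 0 < Q -> 0 < e ->
  \sum_(q | A q) 1 <= t ->
  \sum_(q | A q) X q = Q ->
  (\sum_(q | A q) X q ^+ 2) * t <= Q ^+ 2 * (1 + eta) ->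
  (\sum_(q | A q) (if X q < (1 - e) * (Q / t) then 1 else 0)) * e ^+ 2 <= eta * t.
Proof.
move=> t0 Q0 e0 hS0 hS hS1.
set mu := Q / t.
have m0 : 0 < mu by rewrite divr_gt0.
have Qe : Q = mu * t by rewrite /mu divfK // gt_eqF.
apply: (cheb_alg (S1 := \sum_(q | A q) X q ^+ 2) t0 m0 e0 _ hS0); last by rewrite -Qe.
  by apply: sumr_ge0 => q _; case: ifP.
have -> : \sum_(q | A q) X q ^+ 2 - 2 * mu * (mu * t) + mu ^+ 2 * \sum_(q | A q) 1 =
    \sum_(q | A q) (X q - mu) ^+ 2.
  rewrite -Qe -hS mulr_sumr mulr_sumr -sumrB -big_split /=; apply: eq_bigr => q _.
  by rewrite mulr1; ring.
rewrite mulr_suml mulr_suml; apply: ler_sum => q _.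
case: ifP => hq; last by rewrite !mul0r sqr_ge0.
have h : e * mu <= mu - X q by move: hq; rewrite mulrBl mul1r; lra.
have h0 : 0 <= e * mu by rewrite mulr_ge0 ?ltW.
rewrite mul1r; nra.
Qed.

Local Open Scope nat_scope.

Lemma delta_uniq d (x y : cube d) (l1 l2 : 'I_d) :
  delta_is x y l1 -> delta_is x y l2 -> l1 = l2.
Proof.
move=> /andP[n1 /forallP f1] /andP[n2 /forallP f2].
case: (ltngtP l1 l2) => [h|h|/val_inj //].
  by move: (f2 l1); rewrite h /= (negbTE n1).
by move: (f1 l2); rewrite h /= (negbTE n2).
Qed.

Definition eeg (l p : nat) : nat := if p < l then 1 else if p == l then 0 else 2.

Lemma sum_eeg d l : l < d -> \sum_(p < d) eeg l p = 2 * d - l.+1 - 1.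
Proof.
move=> hl.
rewrite -(big_mkord xpredT (eeg l)) (big_cat_nat (n:=l)) //=; last exact: ltnW.
rewrite [X in _ + X](big_cat_nat (n:=l.+1)) //=.
rewrite big_nat1 /eeg ltnn eqxx add0n.
rewrite (eq_big_nat _ _ (F2 := fun _ => 1)); last by move=> i /andP[_ ->].
rewrite [X in _ + X](eq_big_nat _ _ (F2 := fun _ => 2)); last first.
  by move=> i /andP[h _]; rewrite ltnNge (ltnW h) /= gtn_eqF.
rewrite !sum_nat_const_nat; lia.
Qed.

Definition cond (l p : nat) (a b : bool) : bool :=
  if p < l then a == b else if p == l then ~~ a && b else true.

Lemma A_cond d (x y : cube d) (l : 'I_d) (p : 'I_d) :
  lexlt x y && delta_is x y l -> cond l p (x p) (y p).
Proof.
case/andP=> /existsP[l' /andP[hd' hx]] hd.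
have el := delta_uniq hd' hd; subst l'.
move: hd => /andP[nxy /forallP f]; rewrite /cond.
case: ltngtP => h.
- by have := f p; rewrite h.
- by [].
- have -> : p = l by apply: val_inj.
  by move: nxy hx; case: (x l); case: (y l).
Qed.

Lemma sum_cond (l p : nat) : \sum_a \sum_b (cond l p a b : nat) = 2 ^ (eeg l p).
Proof.
rewrite /cond /eeg; case: ltngtP => _; rewrite !big_bool //=.
Qed.

Lemma card_A d (l : 'I_d) :
  \sum_(q : cube d * cube d | lexlt q.1 q.2 && delta_is q.1 q.2 l) 1 <= tau l.
Proof.
rewrite big_mkcond /=.
apply: (@leq_trans (\sum_(q : cube d * cube d) \prod_(p : 'I_d) (cond l p (q.1 p) (q.2 p) : nat))).
  apply: leq_sum => q _; case: ifP => // h; rewrite big1 // => p _.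
  by rewrite (A_cond p h).
rewrite -(pair_bigA _ (fun x y : cube d => \prod_(p : 'I_d) (cond l p (x p) (y p) : nat))) /=.
rewrite (sum_ffun2_prod (fun (p : 'I_d) a b => (cond l p a b : nat))).
rewrite /tau -(sum_eeg (ltn_ord l)) expn_sum; apply: eq_leq; apply: eq_bigr => p _.
exact: sum_cond.
Qed.

End P5sec.

Definition Om1 n d : nat := \sum_(w : Om n d) 1.

Lemma Om1E n d : Om1 n d = (2 ^ n.+1) ^ d.
Proof. by rewrite /Om1 sum1_card !card_ffun card_bool !card_ord. Qed.

Lemma Om2E n d : Om2 n d = Om1 n d * Om1 n d.
Proof. by rewrite /Om2 Om1E expnMn. Qed.

Lemma Om1_gt0 n d : 0 < Om1 n d.
Proof. by rewrite Om1E !expn_gt0. Qed.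

Section Edge2.
Variables (n d : nat) (L : {set 'I_d}) (B M : nat).
Hypothesis HM : M + n * B <= #|L|.
Variables (u v : 'I_n) (s : nat).
Hypothesis uv : u < v.
Hypothesis hsB : n * B <= s.
Hypothesis hsM : s < M.

Lemma sq_bound :
  (\sum_(q | Aset HM hsM q) cnt L B M u v s q * cnt L B M u v s q) * tau (lo HM hsM)
   <= Om1 n d * Om1 n d * (B * B + 2 ^ n * (n * n * B)).
Proof.
apply: (@leq_trans ((\sum_q cnt L B M u v s q * cnt L B M u v s q) * tau (lo HM hsM))).
  rewrite leq_mul2r; apply/orP; right; rewrite [X in _ <= X](bigID (Aset HM hsM)) /=.
  exact: leq_addr.
rewrite sumsq_cnt.
have E : forall (k : nat) (f : cfg B M -> cfg B M -> nat),
    \sum_(c : cfg B M) \sum_(c' : cfg B M) k * f c c' = k * \sum_(c : cfg B M) \sum_(c' : cfg B M) f c c'.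
  by move=> k f; rewrite big_distrr; apply: eq_bigr => c _; rewrite big_distrr.
apply: (@leq_trans (Om2 n d * \sum_(c : cfg B M) \sum_(c' : cfg B M)
   (((lev n L c u == lv L s) && (lev n L c' u == lv L s) : nat) +
     2 ^ n * (((lev n L c u == lv L s) && (lev n L c' u == lv L s) : nat) * OV L u c c')))).
  rewrite -E big_distrl /=; apply: leq_sum => c _; rewrite big_distrl /=; apply: leq_sum => c' _.
  case: (boolP ((lev n L c u == lv L s) && (lev n L c' u == lv L s))) => //.
  case/andP=> /eqP h1 /eqP h2; rewrite !mul1n.
  exact: (@coll_bound2 n d L B M HM u v s uv hsB hsM c c' h1 h2).
rewrite -Om2E leq_mul2l; apply/orP; right.
under eq_bigr do rewrite big_split /=.
rewrite big_split /= leq_add //.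
  have EB : \sum_(c : cfg B M) \sum_(c' : cfg B M)
      (((lev n L c u == lv L s) && (lev n L c' u == lv L s)) : nat) = B * B.
    rewrite -[X in _ = X * _](lev_count HM uv hsB hsM) -[X in _ = _ * X](lev_count HM uv hsB hsM) big_distrl /=; apply: eq_bigr => c _.
    rewrite big_distrr /=; apply: eq_bigr => c' _; by rewrite mulnb.
  by rewrite EB.
rewrite E leq_mul2l; apply/orP; right.
exact: (@sum_OV n d L B M HM u v s uv hsB hsM).
Qed.

Local Open Scope ring_scope.

Lemma edge_bad (R : realType) (eps : R) : 0 < eps -> (0 < B)%N ->
  (\sum_(q | Aset HM hsM q)
     (if (cnt L B M u v s q)%:R < (1 - eps) * ((B * Om1 n d)%:R / (tau (lo HM hsM))%:R)
      then 1 else 0)) * eps ^+ 2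
  <= ((2 ^ n * (n * n))%:R / B%:R) * (tau (lo HM hsM))%:R.
Proof.
move=> e0 B0.
apply: cheb => //.
- by rewrite ltr0n /tau expn_gt0.
- by rewrite ltr0n muln_gt0 B0 Om1_gt0.
- have h := card_A (lo HM hsM); rewrite -(ler_nat R) natr_sum in h.
  by apply: le_trans _ h; rewrite /Aset.
- by rewrite -natr_sum (sumA_cnt HM uv hsB hsM).
- have -> : \sum_(q | Aset HM hsM q) ((cnt L B M u v s q)%:R : R) ^+ 2 =
      (\sum_(q | Aset HM hsM q) cnt L B M u v s q * cnt L B M u v s q)%N%:R.
    by rewrite natr_sum; apply: eq_bigr => q _; rewrite natrM expr2.
  rewrite -natrM; apply: le_trans (_ : (Om1 n d * Om1 n d * (B * B + 2 ^ n * (n * n * B)))%N%:R <= _).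
    by rewrite ler_nat sq_bound.
  have Bn : (B%:R : R) != 0 by rewrite pnatr_eq0 -lt0n.
  suff -> : ((B * Om1 n d)%:R : R) ^+ 2 * (1 + (2 ^ n * (n * n))%:R / B%:R) =
    (Om1 n d * Om1 n d * (B * B + 2 ^ n * (n * n * B)))%N%:R by [].
  rewrite !natrM !natrD !natrM; field; exact: Bn.
Qed.
End Edge2.

Lemma count_idx d (A : {set 'I_d}) (g : 'I_d -> nat) K (h : nat -> nat) :
  {in A &, injective g} -> (forall l, l \in A -> exists j : 'I_K, g l == h j) -> #|A| <= K.
Proof.
move=> ig hA; rewrite -sum1_card.
apply: (@leq_trans (\sum_(l in A) \sum_(j : 'I_K) (g l == h j : nat))).
  apply: leq_sum => l lA; have [j hj] := hA l lA; by rewrite (bigD1 j) //= hj.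
rewrite exchange_big /= -[K in X in _ <= X]card_ord -sum1_card; apply: leq_sum => j _.
apply: (@leq_trans (\sum_l ((l \in A) && (g l == h j) : nat))).
  by rewrite big_mkcond; apply: leq_sum => l _; case: ifP.
apply: sum_le1 => x y /andP[hx /eqP ex] /andP[hy /eqP ey].
by apply: ig => //; rewrite ex ey.
Qed.

Section Main.
Variable R : realType.
Variables (n d : nat) (E : rel 'I_n) (L : {set 'I_d}) (B M : nat).
Hypothesis HM : M + n * B <= #|L|.

Definition NN : nat := M * B * Om1 n d.
Definition pr (f : {ffun 'I_n -> cube d}) : R :=
  ((\sum_(x : Xs n d B M) (F L x.1 x.2 == f : nat))%:R / NN%:R)%R.

Lemma sum_Xs : \sum_(x : Xs n d B M) 1 = NN.
Proof.
rewrite -(pair_bigA _ (fun (c : cfg B M) (w : Om n d) => 1)) /=.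
rewrite -/(Om1 n d) sum_nat_const card_prod !card_ord /NN mulnC.
by [].
Qed.

Lemma NN_gt0 : (0 < M)%N -> (0 < B)%N -> (0 < NN)%N.
Proof. by move=> M0 B0; rewrite /NN !muln_gt0 M0 B0 Om1_gt0. Qed.

Lemma pr_distr : (0 < M)%N -> (0 < B)%N -> is_embedding_distr pr.
Proof.
move=> M0 B0; have N0 := NN_gt0 M0 B0.
split; [|split].
- by move=> f; rewrite /pr divr_ge0 ?ler0n.
- rewrite /pr -mulr_suml -natr_sum exchange_big /=.
  rewrite (eq_bigr (fun _ => 1%N)); last first.
    by move=> X _; rewrite (bigD1 (F L X.1 X.2)) //= eqxx big1 // => f /negbTE; rewrite eq_sym => ->.
  by rewrite sum_Xs divff // pnatr_eq0 -lt0n.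
- move=> f; case: (pickP (fun X : Xs n d B M => F L X.1 X.2 == f)) => [X /eqP <-|h].
    by move=> _; apply: F_emb HM X.1 X.2.
  by rewrite /pr big1 ?mul0r ?eqxx // => X _; rewrite h.
Qed.

Lemma eii_sum (X : Xs n d B M) (s : nat) (x y : cube d) :
  \sum_(e : 'I_n * 'I_n | E e.1 e.2 && (e.1 < e.2))
     (Pl L e.1 s X && (gF L e.1 e.2 X == (x, y)) : nat)
  <= edge_in_image E (F L X.1 X.2) x y.
Proof.
case: (boolP (edge_in_image E (F L X.1 X.2) x y)) => h.
  apply: (@leq_trans (\sum_(e : 'I_n * 'I_n) ((E e.1 e.2 && (e.1 < e.2)) && (gF L e.1 e.2 X == (x, y)) : nat))).
    rewrite big_mkcond /=; apply: leq_sum => e _; case: ifP => //= _.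
    by case: (Pl _ _ _ _); case: (_ == _).
  apply: sum_le1 => [[a b] [a' b']] /= /andP[/andP[_ ab] /eqP e1] /andP[/andP[_ ab'] /eqP e2].
  have /injectiveP inj := proj1 (andP (F_emb HM X.1 X.2)).
  move: e1 e2; rewrite /gF /= => -[ha hb] [ha' hb'].
  by rewrite (inj _ _ (etrans ha (esym ha'))) (inj _ _ (etrans hb (esym hb'))).
rewrite leqn0 sum_nat_eq0; apply/forallP => e; apply/implyP => /andP[he _].
rewrite eqb0; apply/negP => /andP[_ /eqP]; rewrite /gF /= => -[h1 h2].
move: h => /existsP; apply; exists e.1; apply/existsP; exists e.2.
by rewrite he h1 h2 !eqxx.
Qed.

Definition PE (e : 'I_n * 'I_n) : bool := E e.1 e.2 && (e.1 < e.2).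

Lemma prob_lower s (x y : cube d) :
  (0 < NN)%N ->
  ((\sum_(e | PE e) cnt L B M e.1 e.2 s (x, y))%:R / NN%:R <= prob_edge E pr x y)%R.
Proof.
move=> N0; rewrite /prob_edge /pr -mulr_suml -natr_sum.
apply: ler_wpM2r; first by rewrite invr_ge0 ler0n.
rewrite ler_nat.
apply: (@leq_trans (\sum_(X : Xs n d B M) (edge_in_image E (F L X.1 X.2) x y : nat))).
  rewrite /cnt exchange_big /=; apply: leq_sum => X _; exact: eii_sum.
rewrite [X in _ <= X]exchange_big /=; apply: eq_leq; apply: eq_bigr => X _.
case: (boolP (edge_in_image E (F L X.1 X.2) x y)) => h.
  rewrite (bigD1 (F L X.1 X.2)) //= eqxx big1 // => f /andP[_].
  by rewrite eq_sym => /negbTE ->.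
rewrite big1 // => f hf; case: eqP => // e; move: h; rewrite e hf.
by [].
Qed.

Local Open Scope ring_scope.

Lemma sum_PE_const (c : R) : \sum_(e | PE e) c = (num_edges E)%:R * c.
Proof.
rewrite /num_edges (eq_bigl (fun e => e \in [set e | PE e])) ?sumr_const ?mulr_natl //.
by move=> e; rewrite inE.
Qed.

Lemma num_edges_le : (num_edges E <= n * n)%N.
Proof. by apply: leq_trans (max_card _) _; rewrite card_prod card_ord. Qed.

Lemma prob_ge (eps : R) s (hsM : (s < M)%N) (q : cube d * cube d) :
  (0 < M)%N -> (0 < B)%N ->
  (forall e, PE e -> (1 - eps) * ((B * Om1 n d)%:R / (tau (lo HM hsM))%:R)
                       <= (cnt L B M e.1 e.2 s q)%:R) ->
  (1 - eps) * (num_edges E)%:R / (#|L|%:R * (tau (lo HM hsM))%:R) <= prob_edge E pr q.1 q.2.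
Proof.
case: q => x y M0 B0 h /=.
set t : R := (tau (lo HM hsM))%:R.
have t0 : 0 < t by rewrite ltr0n /tau expn_gt0.
have N0 := NN_gt0 M0 B0.
have m0 : (0 : R) < #|L|%:R by rewrite ltr0n; move: M0 HM; clear; lia.
case: (lerP 0 (1 - eps)) => he.
  apply: le_trans (prob_lower s x y N0); rewrite natr_sum.
  have hs : (num_edges E)%:R * ((1 - eps) * ((B * Om1 n d)%:R / t))
            <= \sum_(e | PE e) (cnt L B M e.1 e.2 s (x, y))%:R.
    by rewrite -sum_PE_const; apply: ler_sum.
  apply: le_trans (_ : _ <= (num_edges E)%:R * ((1 - eps) * ((B * Om1 n d)%:R / t)) / NN%:R) _;
    last by apply: ler_wpM2r; rewrite ?invr_ge0 ?ler0n.
  have -> : (num_edges E)%:R * ((1 - eps) * ((B * Om1 n d)%:R / t)) / NN%:R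
          = (1 - eps) * (num_edges E)%:R / (M%:R * t).
    have hB : (B%:R : R) != 0 by rewrite pnatr_eq0 -lt0n.
    have hO : ((Om1 n d)%:R : R) != 0 by rewrite pnatr_eq0 -lt0n Om1_gt0.
    have hMM : (M%:R : R) != 0 by rewrite pnatr_eq0 -lt0n.
    rewrite /NN !natrM; field; rewrite hB hO hMM /= gt_eqF //.
  rewrite -!mulrA; apply: ler_wpM2l => //; apply: ler_wpM2l; first exact: ler0n.
  have L0 : (0 < #|L|)%N by apply: leq_trans M0 (leq_trans (leq_addr _ _) HM).
  have T0 : (0 < tau (lo HM hsM))%N by rewrite /tau expn_gt0.
  rewrite lef_pV2 ?posrE ?mulr_gt0 ?ltr0n //.
  by rewrite ler_pM2r // ler_nat; apply: leq_trans HM; apply: leq_addr.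
apply: (@le_trans _ _ (0 : R)).
  apply: mulr_le0_ge0; first by apply: mulr_le0_ge0; [exact: ltW | exact: ler0n].
  by rewrite invr_ge0 mulr_ge0 ?ler0n ?ltW.
by apply: sumr_ge0 => f _; rewrite /pr divr_ge0 ?ler0n.
Qed.

Lemma good_interior (eps : R) s (hsB : (n * B <= s)%N) (hsM : (s < M)%N) :
  (0 < B)%N -> 0 < eps ->
  (n * n)%:R * ((2 ^ n * (n * n))%:R / B%:R) <= eps ^+ 3 ->
  good_level E pr eps L (lo HM hsM).
Proof.
move=> B0 e0 hB.
have M0 : (0 < M)%N by apply: leq_ltn_trans hsM.
set t : R := (tau (lo HM hsM))%:R.
have t0 : 0 < t by rewrite ltr0n /tau expn_gt0.
set thr := (1 - eps) * ((B * Om1 n d)%:R / t).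
set eta : R := (2 ^ n * (n * n))%:R / B%:R.
have eta0 : 0 <= eta by rewrite divr_ge0 ?ler0n.
rewrite /good_level -/t.
apply: (@le_trans _ _ (\sum_(e | PE e) \sum_(q | Aset HM hsM q)
    (if (cnt L B M e.1 e.2 s q)%:R < thr then 1 else 0))).
  rewrite -sum1_card natr_sum exchange_big /= big_mkcond [X in _ <= X]big_mkcond /=.
  apply: ler_sum => q _.
  case: (boolP (q \in bad_pairs E pr eps L (lo HM hsM))) => hq; last first.
    case: ifP => // _; apply: sumr_ge0 => e _; by case: ifP.
  move: (hq); rewrite inE => /and3P[h1 h2 h3].
  have -> : Aset HM hsM q by rewrite /Aset h1 h2.
  case: (boolP [exists e, PE e && ((cnt L B M e.1 e.2 s q)%:R < thr)]).
    case/existsP => e /andP[pe hc]; rewrite (bigD1 e) //= hc lerDl.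
    by apply: sumr_ge0 => e' _; case: ifP.
  move=> /existsPn hn; exfalso; move/negP: h3; apply.
  apply: prob_ge => // e pe; rewrite leNgt; move: (hn e); rewrite pe.
  by rewrite -/thr.
apply: (@le_trans _ _ (\sum_(e | PE e) (eta * t / eps ^+ 2))).
  apply: ler_sum => e /andP[_ uv].
  rewrite ler_pdivlMr ?exprn_gt0 //.
  exact: (@edge_bad n d L B M HM e.1 e.2 s uv hsB hsM R eps e0 B0).
rewrite sum_PE_const.
apply: (@le_trans _ _ ((n * n)%:R * (eta * t / eps ^+ 2))).
  apply: ler_wpM2r; first by apply: divr_ge0; [apply: mulr_ge0 => //; exact: ltW | apply: exprn_ge0; exact: ltW].
  by rewrite ler_nat num_edges_le.
rewrite mulrA mulrA -(mulrA _ eta) -/eta.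
rewrite ler_pdivrMr ?exprn_gt0 //.
apply: le_trans (_ : eps ^+ 3 * t <= _).
  by rewrite mulrA ler_pM2r.
have -> : eps * t * eps ^+ 2 = eps ^+ 3 * t by ring.
exact: lexx.
Qed.
End Main.

End Aux.

Unset Implicit Arguments.
Theorem lemma3p2 (R : realType) (n : nat) (E : rel 'I_n)
  (E_irr : irreflexive E) (E_sym : symmetric E) (eps : R) (eps_gt0 : (0 < eps)%R) :
  exists C : nat, forall (d : nat) (L : {set 'I_d}), (C <= #|L|)%N ->
    exists p : {ffun 'I_n -> cube d} -> R,
      is_embedding_distr p /\
      (#|[set l in L | ~~ good_level E p eps L l]|%:R <= eps * #|L|%:R)%R.
Proof.
pose K : R := ((n * n)%:R * (2 ^ n * (n * n))%:R)%R.
pose B := (Num.truncn (K / eps ^+ 3)).+1.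
have B0 : (0 < B)%N by [].
have e3 : (0 < eps ^+ 3)%R by rewrite exprn_gt0.
have hB : ((n * n)%:R * ((2 ^ n * (n * n))%:R / B%:R) <= eps ^+ 3)%R.
  have h := truncnS_gt (K / eps ^+ 3); rewrite -/B in h.
  rewrite mulrA -/K ler_pdivrMr ?ltr0n //.
  by move: h; rewrite ltr_pdivrMr // mulrC => /ltW.
pose C0 := (Num.truncn ((2 * n * B)%:R / eps)).+1.
exists (C0 + (n * B).+1)%N => d L hC.
pose M := (#|L| - n * B)%N.
have nBL : (n * B <= #|L|)%N by apply: leq_trans hC; rewrite addnS ltnW // ltnS leq_addl.
have HM : (M + n * B <= #|L|)%N by rewrite /M subnK.
have M0 : (0 < M)%N.
  rewrite /M subn_gt0; apply: leq_trans hC; rewrite addnS ltnS leq_addl.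
  by [].
exists (@pr R n d L B M); split; first exact: pr_distr.
pose g (l : 'I_d) := index (val l) (Lseq L).
have gL : forall l : 'I_d, l \in L -> (g l < #|L|)%N /\ Lnat L (g l) = val l.
  move=> l lL; have hl : val l \in Lseq L by apply/mapP; exists l; rewrite ?mem_enum.
  by split; [rewrite -size_Lseq index_mem | rewrite /Lnat nth_index].
have sub : [set l in L | ~~ good_level E (@pr R n d L B M) eps L l] \subset
    [set l in L | (g l < n * B)%N || (M <= g l)%N].
  apply/subsetP => l; rewrite !inE => /andP[lL ng]; rewrite lL /=.
  have [gl Lg] := gL l lL.
  apply: contraNT ng; rewrite negb_or -leqNgt -ltnNge => /andP[hsB hsM].
  have -> : l = lo HM hsM by apply: val_inj; rewrite /= /lv Lg.
  exact: good_interior.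
have card2 : (#|[set l in L | (g l < n * B)%N || (M <= g l)%N]| <= 2 * n * B)%N.
  apply: (count_idx (h := fun j => if (j < n * B)%N then j else (M + (j - n * B))%N)).
    move=> l1 l2; rewrite !inE => /andP[l1L _] /andP[l2L _] e.
    have [_ h1] := gL l1 l1L; have [_ h2] := gL l2 l2L.
    by apply: val_inj; rewrite -h1 -h2; exact: (congr1 (Lnat L) e).
  move=> l; rewrite inE => /andP[lL /orP[h|h]]; have [gl _] := gL l lL.
    have hj : (g l < 2 * n * B)%N by apply: leq_trans h _; rewrite -mulnA leq_pmull.
    by exists (Ordinal hj); rewrite /= h.
  have hj : (n * B + (g l - M) < 2 * n * B)%N.
    by move: gl h HM; rewrite /M; clear; lia.
  exists (Ordinal hj); rewrite /= ltnNge leq_addr /=.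
  by rewrite addKn subnKC.
apply: (@le_trans _ _ ((2 * n * B)%:R : R)%R).
  by rewrite ler_nat; apply: leq_trans (subset_leq_card sub) card2.
have h := truncnS_gt ((2 * n * B)%:R / eps); rewrite -/C0 in h.
move: h; rewrite ltr_pdivrMr // => /ltW h; apply: le_trans h _.
rewrite mulrC ler_pM2l // ler_nat.
by apply: leq_trans hC; apply: leq_addr.
Qed.
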